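(* Let $\delta=S/(2\pi\mu)\in(0,1)$, and let $\tau_0=\tau_1/k$, where $\tau_1>k$ is the positive root of $\lambda_1(\tau)=k$. For $a\in(0,b)$ and $\nu=0$, the equation $\mathcal R(a)=0$, with $\mathcal R(a)=kS\,g(-a;\tau_1,k)+2\pi\mu\,g'(-a;\tau_1,k)$, is equivalent to $$\tanh(ak\tau_0)=\frac{\tau_0(1+\delta)}{\tau_0^2+\delta}.$$ Moreover: (i) if $k,b,\delta$ are fixed and $\alpha=1-\beta$ is sufficiently small, this equation has a solution $a^*\in(0,b)$, and $a^*\sim \alpha^2(1+\delta)/(4k)$ as $\alpha\to0$; (ii) if $k,b,\delta$ are fixed and $\beta$ is sufficiently small, this equation has no solution $a\in(0,b)$.
   Context: Fix $k>0$, $b>0$, $\beta\in(0,1)$, $\alpha=1-\beta$. $\lambda_1(\tau)=\dfrac{\alpha\tau\tanh b\tau}{1+\beta\tanh b\tau}$; the equation $\lambda_1(\tau)=k$ has a unique positive root $\tau_1$, and $\tau_1>k$. $g(y;\tau,\lambda)=\tau\cosh\tau y+\lambda\sinh\tau y$, $g'=\partial g/\partial y$. $S>0$ is the area enclosed by a simple closed smooth curve $C$ and $\mu>0$ is its vertical dipole strength: with $n=(n_1,n_2)$ the unit normal to $C$ pointing into its interior, $\Psi$ the solution of $\Delta\Psi=0$ outside $C$, $\partial\Psi/\partial n=n_2$ on $C$, $\nabla\Psi\to 0$ at infinity, $\mu=\frac1{2\pi}(S+\int_C n_2\Psi\,dl)$; one has $S<2\pi\mu$. *)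

(* Defs.v *)
From Stdlib Require Import Reals ClassicalEpsilon.
From Coquelicot Require Import Coquelicot.
Open Scope R_scope.

Definition lambda1 (b beta tau : R) : R :=
  (1 - beta) * tau * tanh (b * tau) / (1 + beta * tanh (b * tau)).

Definition tau1 (k b beta : R) : R :=
  epsilon (inhabits 0) (fun t => 0 < t /\ lambda1 b beta t = k).

Definition g (y tau lam : R) : R := tau * cosh (tau * y) + lam * sinh (tau * y).

Definition g' (y tau lam : R) : R := Derive (fun z => g z tau lam) y.

Definition Rfun (k b beta S mu a : R) : R :=
  k * S * g (- a) (tau1 k b beta) k + 2 * PI * mu * g' (- a) (tau1 k b beta) k.

Definition delta (S mu : R) : R := S / (2 * PI * mu).
Definition tau0 (k b beta : R) : R := tau1 k b beta / k.

Definition key_eq (k b beta S mu a : R) : Prop :=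
  tanh (a * k * tau0 k b beta) =
  tau0 k b beta * (1 + delta S mu) / (tau0 k b beta ^ 2 + delta S mu).

(* Main.v *)
Require Import Defs.
From Stdlib Require Import Reals Lra Psatz ClassicalEpsilon.
From Coquelicot Require Import Coquelicot.
Open Scope R_scope.
From Stdlib Require Import Lra Psatz ClassicalEpsilon.

Lemma tanh_exp x : tanh x = (exp (2*x) - 1) / (exp (2*x) + 1).
Proof.
  unfold tanh, sinh, cosh.
  replace (2*x) with (x+x) by ring. rewrite exp_plus, exp_Ropp.
  assert (exp x > 0) by apply exp_pos.
  field. split; [|lra]. nra.
Qed.

Lemma tanh_lt1 x : tanh x < 1.
Proof. rewrite tanh_exp. assert (exp (2*x) > 0) by apply exp_pos.
  apply Rmult_lt_reg_r with (exp (2*x) + 1); [lra|].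
  unfold Rdiv; rewrite Rmult_assoc, Rinv_l; lra. Qed.

Lemma tanh_gtm1 x : -1 < tanh x.
Proof. rewrite tanh_exp. assert (exp (2*x) > 0) by apply exp_pos.
  apply Rmult_lt_reg_r with (exp (2*x) + 1); [lra|].
  unfold Rdiv; rewrite Rmult_assoc, Rinv_l; lra. Qed.

Lemma tanh_lb x : 0 <= x -> x <= tanh x * (1 + x).
Proof. intros Hx. rewrite tanh_exp. pose proof (exp_ineq1_le (2*x)).
  assert (exp (2*x) > 0) by apply exp_pos.
  set (u := exp (2*x)) in *.
  replace ((u - 1) / (u + 1) * (1 + x)) with ((u-1)*(1+x)/(u+1)) by (field; lra).
  apply Rmult_le_reg_r with (u+1); [lra|].
  unfold Rdiv; rewrite Rmult_assoc, Rinv_l by lra. nra. Qed.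

Lemma tanh_ub x : 0 <= x < 1/2 -> tanh x * (1 - 2*x) <= x.
Proof. intros Hx. rewrite tanh_exp. pose proof (exp_ineq1_le (-(2*x))).
  assert (exp (2*x) > 0) by apply exp_pos.
  assert (exp (2*x) >= 1) by (pose proof (exp_ineq1_le (2*x)); lra).
  rewrite exp_Ropp in H.
  set (u := exp (2*x)) in *.
  assert (u*(1-2*x) <= 1).
  { apply Rmult_le_reg_r with (/u). apply Rinv_0_lt_compat; lra.
    replace (u * (1 - 2 * x) * / u) with (1-2*x) by (field; lra). lra. }
  replace ((u - 1) / (u + 1) * (1 - 2*x)) with ((u-1)*(1-2*x)/(u+1)) by (field; lra).
  apply Rmult_le_reg_r with (u+1); [lra|].
  unfold Rdiv; rewrite Rmult_assoc, Rinv_l by lra. nra. Qed.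

Lemma tanh_incr x y : x < y -> tanh x < tanh y.
Proof. intros H. rewrite !tanh_exp.
  assert (exp (2*x) < exp (2*y)) by (apply exp_increasing; lra).
  assert (exp (2*x) > 0) by apply exp_pos.
  replace ((exp (2*x) - 1) / (exp (2*x) + 1)) with (1 - 2 / (exp (2*x)+1)) by (field; lra).
  replace ((exp (2*y) - 1) / (exp (2*y) + 1)) with (1 - 2 / (exp (2*y)+1)) by (field; lra).
  assert (2 / (exp (2*y)+1) < 2 / (exp (2*x)+1)).
  { unfold Rdiv. apply Rmult_lt_compat_l; [lra|]. apply Rinv_lt_contravar; nra. }
  lra. Qed.

Lemma tanh_pos x : 0 < x -> 0 < tanh x.
Proof. intros. replace 0 with (tanh 0). now apply tanh_incr.
  unfold tanh, sinh. rewrite Ropp_0, Rminus_diag. unfold Rdiv; ring. Qed.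

Definition atanh r := ln ((1+r)/(1-r)) / 2.
Lemma tanh_atanh r : -1 < r < 1 -> tanh (atanh r) = r.
Proof. intros H. rewrite tanh_exp. unfold atanh.
  replace (2 * (ln ((1 + r) / (1 - r)) / 2)) with (ln ((1 + r) / (1 - r))) by field.
  rewrite exp_ln. field. split; lra.
  apply Rdiv_lt_0_compat; lra. Qed.

Lemma lambda1_cont b beta : 0 < beta < 1 -> continuity (lambda1 b beta).
Proof. intros Hb x. apply continuity_pt_filterlim.
  apply (ex_derive_continuous (lambda1 b beta)). unfold lambda1, tanh, sinh, cosh.
  auto_derive.
  pose proof (tanh_gtm1 (b*x)). unfold tanh, sinh, cosh in H.
  assert (exp (b*x) > 0) by apply exp_pos. assert (exp (-(b*x)) > 0) by apply exp_pos.
  unfold Rdiv in H. unfold Rminus in H.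
  split; [lra|]. split; [lra|]. split; [|auto]. nra.
Qed.

Lemma tau1_spec k b beta : 0 < k -> 0 < b -> 0 < beta < 1 ->
  0 < tau1 k b beta /\ lambda1 b beta (tau1 k b beta) = k.
Proof. intros hk hb Hb. unfold tau1. apply epsilon_spec.
  set (M := 4*k/(1-beta) + 1/b).
  assert (HM1 : 4*k/(1-beta) > 0) by (apply Rdiv_lt_0_compat; lra).
  assert (HM2 : 1/b > 0) by (apply Rdiv_lt_0_compat; lra).
  assert (HbM : b*M >= 1).
  { unfold M. replace (b * (4 * k / (1 - beta) + 1 / b)) with (b*(4*k/(1-beta)) + 1) by (field; lra). nra. }
  assert (HT := tanh_lb (b*M) ltac:(lra)).
  assert (HT2 : tanh (b*M) >= 1/2) by nra.
  assert (HT3 := tanh_lt1 (b*M)).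
  assert (Hl : lambda1 b beta M > k).
  { unfold lambda1. apply Rlt_gt. apply Rmult_lt_reg_r with (1 + beta * tanh (b*M)); [nra|].
    unfold Rdiv; rewrite Rmult_assoc, Rinv_l by nra.
    assert ((1-beta)*M >= 4*k).
    { unfold M. replace ((1 - beta) * (4 * k / (1 - beta) + 1 / b)) with (4*k + (1-beta)*(1/b)) by (field; lra). nra. }
    assert ((1-beta)*M*tanh (b*M) >= (1-beta)*M*(1/2)) by (apply Rmult_ge_compat_l; nra).
    assert (k*(beta*tanh (b*M)) < k) by (assert (beta * tanh (b*M) < 1) by nra; nra).
    rewrite Rmult_1_r. nra. }
  assert (Hl0 : lambda1 b beta 0 = 0) by (unfold lambda1; rewrite Rmult_0_r; unfold Rdiv; ring).
  destruct (IVT (fun t => lambda1 b beta t - k) 0 M) as [z [Hz1 Hz2]].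
  - apply continuity_minus. now apply lambda1_cont. apply continuity_const. intros ? ?; auto.
  - unfold M; lra.
  - simpl. lra.
  - simpl. lra.
  - exists z. simpl in Hz2. split; [|lra].
    destruct Hz1 as [Hz1 _]. destruct Hz1 as [|<-]; auto. lra.
Qed.

Lemma cosh_pos x : cosh x > 0.
Proof. unfold cosh. pose proof (exp_pos x). pose proof (exp_pos (-x)). lra. Qed.
Lemma cosh_neg x : cosh (-x) = cosh x.
Proof. unfold cosh. rewrite Ropp_involutive. lra. Qed.
Lemma sinh_neg x : sinh (-x) = - sinh x.
Proof. unfold sinh. rewrite Ropp_involutive. field. Qed.

Lemma g'_eq y t l : g' y t l = t*t*sinh (t*y) + l*t*cosh (t*y).
Proof. unfold g'. apply is_derive_unique. unfold g, sinh, cosh.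
  auto_derive; auto. field. Qed.

Lemma tau1_rel k b beta : 0 < k -> 0 < b -> 0 < beta < 1 ->
  let t0 := tau0 k b beta in let T := tanh (b * tau1 k b beta) in
  0 < T < 1 /\ 0 < t0 /\ (1-beta)*t0*T = 1 + beta*T.
Proof. intros hk hb Hb t0 T.
  destruct (tau1_spec k b beta hk hb Hb) as [Hp Hl].
  assert (0 < T) by (apply tanh_pos; nra). assert (T < 1) by apply tanh_lt1.
  assert (0 < t0) by (unfold t0, tau0; apply Rdiv_lt_0_compat; lra).
  split; [lra|]. split; [lra|].
  unfold lambda1 in Hl. fold T in Hl. unfold t0, tau0.
  assert (1 + beta*T > 0) by nra.
  assert (E : (1-beta)*tau1 k b beta*T = k*(1+beta*T)).
  { rewrite <- Hl at 2. field. lra. }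
  apply Rmult_eq_reg_r with k; [|lra].
  replace ((1 - beta) * (tau1 k b beta / k) * T * k) with ((1-beta)*tau1 k b beta*T) by (field; lra).
  rewrite E. ring.
Qed.

Lemma equiv_part k b S mu beta a : 0 < k -> 0 < b -> 0 < S -> 0 < mu -> 0 < beta < 1 ->
  (Rfun k b beta S mu a = 0 <-> key_eq k b beta S mu a).
Proof. intros hk hb hS hmu Hb.
  destruct (tau1_spec k b beta hk hb Hb) as [Hp _].
  set (t := tau1 k b beta) in *.
  assert (HP : 2*PI*mu > 0) by (pose proof PI_RGT_0; nra).
  set (d := delta S mu).
  assert (hd : d > 0) by (unfold d, delta; apply Rdiv_lt_0_compat; lra).
  assert (HS : S = d * (2*PI*mu)) by (unfold d, delta; field; pose proof PI_RGT_0; repeat split; lra).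
  set (c := cosh (t*a)). set (s := sinh (t*a)).
  assert (hc : c > 0) by (unfold c; apply cosh_pos).
  assert (HR : Rfun k b beta S mu a = 2*PI*mu * (k*t*c*(1+d) - s*(t*t+k*k*d))).
  { unfold Rfun. fold t. rewrite g'_eq. unfold g.
    replace (t * -a) with (-(t*a)) by ring. rewrite cosh_neg, sinh_neg. fold c s.
    rewrite HS. ring. }
  assert (HK : key_eq k b beta S mu a <-> s / c = k*t*(1+d)/(t*t+k*k*d)).
  { unfold key_eq, tau0. fold t d. replace (a*k*(t/k)) with (t*a) by (field; lra).
    unfold tanh. fold s c.
    replace (t / k * (1 + d) / ((t / k) ^ 2 + d)) with (k*t*(1+d)/(t*t+k*k*d)) by (field; split; nra).
    tauto. }
  assert (HD : t*t+k*k*d > 0) by nra.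
  assert (HcD : c*(t*t+k*k*d) <> 0) by (apply Rgt_not_eq; apply Rmult_gt_0_compat; lra).
  rewrite HK, HR. split; intro H.
  - assert (E : k*t*c*(1+d) - s*(t*t+k*k*d) = 0).
    { apply Rmult_eq_reg_l with (2*PI*mu); [rewrite H; ring|lra]. }
    apply (Rmult_eq_reg_r (c*(t*t+k*k*d))). 2: exact HcD.
    replace (s / c * (c * (t * t + k * k * d))) with (s*(t*t+k*k*d)) by (field; lra).
    replace (k * t * (1 + d) / (t * t + k * k * d) * (c * (t * t + k * k * d))) with (k*t*c*(1+d)) by (field; lra).
    lra.
  - apply (f_equal (fun z => z*c*(t*t+k*k*d))) in H.
    replace (s / c * c * (t * t + k * k * d)) with (s*(t*t+k*k*d)) in H by (field; lra).
    replace (k * t * (1 + d) / (t * t + k * k * d) * c * (t * t + k * k * d)) with (k*t*c*(1+d)) in H by (field; lra).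
    rewrite H. ring.
Qed.

Lemma delta_bounds S mu : 0 < S -> 0 < mu -> S < 2*PI*mu -> 0 < delta S mu < 1.
Proof. intros. assert (HP : 2*PI*mu > 0) by lra. unfold delta. split.
  apply Rdiv_lt_0_compat; lra.
  apply Rmult_lt_reg_r with (2*PI*mu); [lra|]. unfold Rdiv. rewrite Rmult_assoc, Rinv_l; lra. Qed.

Lemma part_ii k b S mu : 0 < k -> 0 < b -> 0 < S -> 0 < mu -> S < 2 * PI * mu ->
  exists beta0, 0 < beta0 /\
     forall beta, 0 < beta < beta0 ->
       forall a, 0 < a < b -> ~ key_eq k b beta S mu a.
Proof. intros hk hb hS hmu hSmu.
  destruct (delta_bounds S mu hS hmu hSmu) as [hd0 hd1].
  set (d := delta S mu) in *.
  set (c0 := 1/(b*k)).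
  assert (hc0 : c0 > 0) by (unfold c0; apply Rdiv_lt_0_compat; nra).
  assert (Hc0 : c0 * (b*k) = 1) by (unfold c0; field; lra).
  set (U := 2*(2+c0)).
  set (T1 := tanh (b*k*U)).
  assert (hT1 : 0 < T1 < 1) by (split; [apply tanh_pos; unfold U; nra | apply tanh_lt1]).
  set (eta := (1-T1)/T1).
  assert (heta : eta > 0) by (unfold eta; apply Rdiv_lt_0_compat; lra).
  assert (HetaT : eta * T1 = 1 - T1) by (unfold eta; field; lra).
  exists (Rmin (1/2) (d*eta/(2*U))).
  assert (hU : U > 0) by (unfold U; lra).
  assert (h2 : d*eta/(2*U) > 0) by (apply Rdiv_lt_0_compat; nra).
  split. { apply Rmin_glb_lt; lra. }
  intros beta Hbeta a Ha Hk.
  assert (Hb1 : beta <= 1/2) by (pose proof (Rmin_l (1/2) (d*eta/(2*U))); lra).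
  assert (Hb2 : beta < d*eta/(2*U)) by (pose proof (Rmin_r (1/2) (d*eta/(2*U))); lra).
  assert (Hb2' : beta*(2*U) < d*eta).
  { apply Rmult_lt_reg_r with (/(2*U)). apply Rinv_0_lt_compat; lra.
    replace (beta * (2 * U) * / (2 * U)) with beta by (field; lra). exact Hb2. }
  assert (Hbb : 0 < beta < 1) by lra.
  destruct (tau1_rel k b beta hk hb Hbb) as [HT [Ht0 Hrel]].
  set (t0 := tau0 k b beta) in *.
  set (T := tanh (b * tau1 k b beta)) in *.
  assert (Htau : tau1 k b beta = k*t0) by (unfold t0, tau0; field; lra).
  assert (Ht01' : (1-beta)*t0 > 1).
  { destruct (Rle_or_lt ((1-beta)*t0) 1) as [h|h]; [|lra].
    assert ((1-beta)*t0*T <= 1*T) by (apply Rmult_le_compat_r; lra). nra. }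
  assert (Ht01 : t0 > 1) by nra.
  assert (Hbt : 0 <= b*tau1 k b beta) by (rewrite Htau; assert (k*t0>0) by nra; nra).
  assert (HTl := tanh_lb (b*tau1 k b beta) Hbt). fold T in HTl.
  rewrite Htau in HTl.
  assert (HT1c : 1 <= T*(1+c0)).
  { assert (b*k*t0*(1-T) <= T) by nra.
    assert (b*k*(1-T) <= T) by nra.
    assert (c0*(b*k*(1-T)) <= c0*T) by (apply Rmult_le_compat_l; lra).
    nra. }
  assert (HU : t0 <= U).
  { assert ((1-beta)*t0 <= 2+c0) by nra. unfold U. nra. }
  assert (HTT1 : T <= T1).
  { unfold T, T1. rewrite Htau. destruct (Rle_lt_or_eq_dec t0 U HU) as [h|h].
    - left. apply tanh_incr. assert (b*k > 0) by nra. nra.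
    - right. rewrite h. f_equal. ring. }
  assert (HQ : T*((1-beta)*t0 - beta) = 1) by nra.
  assert (Hteta : t0 - 1 >= eta).
  { assert (t0*T1 >= 1) by nra. nra. }
  set (r := t0 * (1 + d) / (t0 ^ 2 + d)).
  assert (HTr : T < r).
  { unfold r. apply Rmult_lt_reg_r with (t0^2+d). nra.
    unfold Rdiv. rewrite Rmult_assoc, Rinv_l by nra. rewrite Rmult_1_r.
    assert (Hk1 : d*(t0-1) >= d*eta) by (apply Rmult_ge_compat_l; lra).
    assert (Hk2 : beta*(1+d) <= 2*beta) by nra.
    assert (Hk3 : beta*(1+d)*t0 <= 2*beta*U).
    { apply Rle_trans with (2*beta*t0). apply Rmult_le_compat_r; lra.
      apply Rmult_le_compat_l; lra. }
    assert (Hkey : d*(t0-1) > beta*(1+d)*t0) by lra.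
    assert (HQp : (1-beta)*t0 - beta > 0) by nra.
    assert (Hid : t0*(1+d)*((1-beta)*t0 - beta) - (t0^2 + d) = (t0+1)*(d*(t0-1) - beta*(1+d)*t0)) by ring.
    assert ((t0+1)*(d*(t0-1) - beta*(1+d)*t0) > 0) by (apply Rmult_gt_0_compat; lra).
    assert (t0^2 + d < t0*(1+d)*((1-beta)*t0 - beta)) by lra.
    nra. }
  assert (Hlt : tanh (a*k*t0) < T).
  { unfold T. rewrite Htau. apply tanh_incr. assert (kt : k*t0 > 0) by nra.
    replace (a*k*t0) with (a*(k*t0)) by ring. apply Rmult_lt_compat_r; lra. }
  unfold key_eq in Hk. fold t0 d in Hk. fold r in Hk. lra.
Qed.

Lemma tanh_0 : tanh 0 = 0.
Proof. unfold tanh, sinh. rewrite Ropp_0, Rminus_diag. unfold Rdiv; ring. Qed.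

Definition astar_f k b S mu alpha :=
  atanh (tau0 k b (1-alpha) * (1 + delta S mu) / (tau0 k b (1-alpha) ^ 2 + delta S mu))
  / (k * tau0 k b (1-alpha)).

Lemma core k b S mu alpha : 0 < k -> 0 < b -> 0 < S -> 0 < mu -> S < 2 * PI * mu ->
  0 < alpha <= 1/8 -> alpha * (2*(1 + 1/(b*k))) <= 1 ->
  0 < astar_f k b S mu alpha < b /\ key_eq k b (1-alpha) S mu (astar_f k b S mu alpha) /\
  Rabs (astar_f k b S mu alpha / (alpha ^ 2 * (1 + delta S mu) / (4 * k)) - 1)
    <= (4*(1/(b*k)) + (1/(b*k))^2 + 45)/2 * alpha.
Proof. intros hk hb hS hmu hSmu Ha Hac.
  destruct (delta_bounds S mu hS hmu hSmu) as [hd0 hd1].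
  set (d := delta S mu) in *.
  set (c0 := 1/(b*k)) in *.
  assert (hc0 : c0 > 0) by (unfold c0; apply Rdiv_lt_0_compat; nra).
  assert (Hc0 : c0 * (b*k) = 1) by (unfold c0; field; lra).
  assert (Hbb : 0 < 1 - alpha < 1) by lra.
  destruct (tau1_rel k b (1-alpha) hk hb Hbb) as [HT [Ht0 Hrel]].
  set (t0 := tau0 k b (1-alpha)) in *.
  set (T := tanh (b * tau1 k b (1-alpha))) in *.
  replace (1 - (1 - alpha)) with alpha in Hrel by ring.
  assert (Htau : tau1 k b (1-alpha) = k*t0) by (unfold t0, tau0; field; lra).
  assert (F1 : alpha*t0 > 2 - alpha).
  { destruct (Rle_or_lt (alpha*t0) (2-alpha)) as [h|h]; [|lra].
    assert (alpha*t0*T <= (2-alpha)*T) by (apply Rmult_le_compat_r; lra). nra. }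
  assert (Hbt : 0 <= b*tau1 k b (1-alpha)) by (rewrite Htau; assert (k*t0>0) by nra; nra).
  assert (HTl := tanh_lb (b*tau1 k b (1-alpha)) Hbt). fold T in HTl.
  rewrite Htau in HTl.
  assert (F2 : 1 <= T*(1+c0*alpha)).
  { assert (h1 : b*k*t0*(1-T) <= T) by nra.
    assert (h2 : b*k*(alpha*t0)*(1-T) <= alpha*T).
    { replace (b*k*(alpha*t0)*(1-T)) with (alpha*(b*k*t0*(1-T))) by ring.
      apply Rmult_le_compat_l; lra. }
    assert (h3 : b*k*(1-T) <= b*k*(alpha*t0)*(1-T)).
    { assert (b*k*(1-T) >= 0) by nra.
      replace (b*k*(alpha*t0)*(1-T)) with ((b*k*(1-T))*(alpha*t0)) by ring.
      nra. }
    assert (c0*(b*k*(1-T)) <= c0*(alpha*T)) by (apply Rmult_le_compat_l; lra).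
    nra. }
  assert (F3 : alpha*t0 <= 2 + c0*alpha).
  { destruct (Rle_or_lt (alpha*t0) (2 + c0*alpha)) as [h|h]; [lra|].
    assert (alpha*t0*T >= (2+c0*alpha)*T) by (apply Rmult_ge_compat_r; lra). nra. }
  set (r := t0 * (1 + d) / (t0 ^ 2 + d)).
  assert (Hden : t0^2 + d > 0) by nra.
  assert (Hr_eq : r*(t0^2+d) = t0*(1+d)) by (unfold r; field; lra).
  assert (Hr0 : r > 0) by (unfold r; apply Rdiv_lt_0_compat; nra).
  assert (Hrt0 : r*t0 < 2).
  { assert (r*t0*(t0^2+d) < 2*(t0^2+d)).
    { replace (r*t0*(t0^2+d)) with (t0*(r*(t0^2+d))) by ring. rewrite Hr_eq. nra. }
    nra. }
  assert (Hr2a : r < 2*alpha) by nra.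
  assert (Ht0big : t0 > 2*(1+c0)).
  { assert (t0*(alpha*(2*(1+c0))) <= t0) by (rewrite <- (Rmult_1_r t0) at 2; apply Rmult_le_compat_l; lra).
    nra. }
  assert (HTt0 : T*t0 > 1+d).
  { assert (T*t0*(1+c0*alpha) >= t0) by nra.
    assert ((1+d)*(1+c0*alpha) < t0) by nra.
    nra. }
  assert (HrT : r < T).
  { assert (r*(t0^2+d) < T*(t0^2+d)) by nra. nra. }
  set (x := atanh r).
  assert (Hx : tanh x = r) by (apply tanh_atanh; lra).
  assert (Hx0 : x > 0).
  { destruct (Rlt_or_le 0 x) as [h|h]; [lra|]. destruct h as [h|h].
    - pose proof (tanh_incr _ _ h). rewrite tanh_0 in H. lra.
    - rewrite h, tanh_0 in Hx. lra. }
  assert (Hxlb := tanh_lb x ltac:(lra)). rewrite Hx in Hxlb.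
  assert (Hx3 : x < 3*alpha).
  { assert (x*(1-r) <= r) by nra. assert (x*(3/4) <= x*(1-r)) by (apply Rmult_le_compat_l; lra). lra. }
  assert (Hxb : x < b*(k*t0)).
  { destruct (Rlt_or_le x (b*(k*t0))) as [h|h]; [lra|].
    exfalso. assert (tanh (b*(k*t0)) <= tanh x).
    { destruct h as [h|h]. left; now apply tanh_incr. right; now rewrite h. }
    unfold T in HrT. rewrite Htau in HrT. lra. }
  assert (Hxub := tanh_ub x ltac:(lra)). rewrite Hx in Hxub.
  assert (Hkt : k*t0 > 0) by nra.
  assert (Hast : astar_f k b S mu alpha = x/(k*t0)) by reflexivity.
  rewrite Hast.
  split; [|split].
  - split. apply Rdiv_lt_0_compat; lra.
    apply Rmult_lt_reg_r with (k*t0); [lra|]. unfold Rdiv; rewrite Rmult_assoc, Rinv_l; lra.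
  - unfold key_eq. fold t0 d. fold r. rewrite <- Hx. f_equal. field. lra.
  - set (p := x/r). set (D := alpha^2*(t0^2+d)).
    assert (HQ : x / (k * t0) / (alpha ^ 2 * (1 + d) / (4 * k)) = 4*p/D).
    { unfold p, D, r. field. repeat split; first [lra | nra]. }
    rewrite HQ.
    assert (Hpr : p*r = x) by (unfold p; field; lra).
    assert (Hp0 : p > 0) by (unfold p; apply Rdiv_lt_0_compat; lra).
    assert (Hp1 : p*(1-2*alpha) <= 1).
    { assert (p*r*(1-r) <= r) by (rewrite Hpr; lra).
      assert (p*(1-r) <= 1) by (apply Rmult_le_reg_r with r; lra).
      assert (p*(1-2*alpha) <= p*(1-r)) by (apply Rmult_le_compat_l; lra). lra. }
    assert (Hpu : p <= 1 + 4*alpha).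
    { assert (alpha*alpha <= alpha*(1/8)) by (apply Rmult_le_compat_l; lra).
      assert ((1+4*alpha)*(1-2*alpha) >= 1) by lra.
      destruct (Rle_or_lt p (1+4*alpha)) as [h|h]; [lra|].
      assert (p*(1-2*alpha) > (1+4*alpha)*(1-2*alpha)) by (apply Rmult_gt_compat_r; lra). lra. }
    assert (Hpl : p >= 1 - 6*alpha).
    { assert (r*(1-2*x) <= p*r) by (rewrite Hpr; lra).
      assert (1 - 2*x <= p) by (apply Rmult_le_reg_r with r; lra). lra. }
    assert (HD1 : D = (alpha*t0)^2 + alpha^2*d) by (unfold D; ring).
    assert (HDl : D >= 4 - 4*alpha).
    { set (y := alpha*t0) in *.
      assert (y^2 >= (2-alpha)^2).
      { assert (y^2 - (2-alpha)^2 = (y - (2-alpha))*(y + (2-alpha))) by ring.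
        assert ((y - (2-alpha))*(y + (2-alpha)) > 0) by (apply Rmult_gt_0_compat; lra). lra. }
      assert (alpha^2*d >= 0) by (apply Rle_ge; apply Rmult_le_pos; [apply pow2_ge_0|lra]).
      assert ((2-alpha)^2 = 4 - 4*alpha + alpha^2) by ring.
      assert (alpha^2 >= 0) by (apply Rle_ge, pow2_ge_0). lra. }
    assert (HDu : D <= 4 + (4*c0 + c0^2 + 1)*alpha).
    { set (y := alpha*t0) in *.
      assert (y^2 <= (2+c0*alpha)^2).
      { assert ((2+c0*alpha)^2 - y^2 = (2+c0*alpha - y)*(2+c0*alpha + y)) by ring.
        assert ((2+c0*alpha - y)*(2+c0*alpha + y) >= 0) by (apply Rle_ge, Rmult_le_pos; lra). lra. }
      assert (alpha^2*(1-d) >= 0) by (apply Rle_ge, Rmult_le_pos; [apply pow2_ge_0|lra]).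
      assert ((2+c0*alpha)^2 = 4 + 4*c0*alpha + c0^2*alpha^2) by ring.
      assert (c0^2*alpha*(1-alpha) >= 0) by (apply Rle_ge, Rmult_le_pos; [apply Rmult_le_pos; [apply pow2_ge_0|lra]|lra]).
      assert (alpha*(1-alpha) >= 0) by (apply Rle_ge, Rmult_le_pos; lra).
      assert (alpha^2 = alpha*alpha) by ring.
      assert (c0^2*alpha^2 = c0^2*alpha*alpha) by ring.
      lra. }
    assert (HD2 : D >= 2) by lra.
    set (K := (4*c0 + c0^2 + 45)/2).
    assert (HK : K >= (4*c0 + c0^2 + 1) + 44 - K) by (unfold K; lra).
    assert (HK2 : K*alpha*2 >= (4*c0 + c0^2 + 1 + 44)*alpha).
    { assert ((K*2 - (4*c0 + c0^2 + 1 + 44))*alpha >= 0) by (apply Rle_ge, Rmult_le_pos; lra). lra. }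
    assert (HKp : K*alpha >= 0) by (apply Rle_ge, Rmult_le_pos; unfold K; [assert (c0^2 >= 0) by (apply Rle_ge, pow2_ge_0)|]; lra).
    assert (HKD : K*alpha*D >= K*alpha*2) by (apply Rmult_ge_compat_l; lra).
    assert (Hc2 : c0^2 >= 0) by (apply Rle_ge, pow2_ge_0).
    assert (Hca : c0^2*alpha >= 0) by (apply Rle_ge, Rmult_le_pos; lra).
    assert (Hca2 : c0*alpha >= 0) by (apply Rle_ge, Rmult_le_pos; lra).
    assert (4*p/D - 1 = (4*p - D)/D) by (field; lra).
    rewrite H. apply Rabs_le. split.
    + apply Rmult_le_reg_r with D; [lra|]. unfold Rdiv. rewrite Rmult_assoc, Rinv_l by lra.
      lra.
    + apply Rmult_le_reg_r with D; [lra|]. unfold Rdiv. rewrite Rmult_assoc, Rinv_l by lra.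
      lra.
Qed.

Theorem mainTheorem4 (k b S mu : R) (hk : 0 < k) (hb : 0 < b)
  (hS : 0 < S) (hmu : 0 < mu) (hSmu : S < 2 * PI * mu) :
  (forall beta a, 0 < beta < 1 -> 0 < a < b ->
     (Rfun k b beta S mu a = 0 <-> key_eq k b beta S mu a)) /\
  (exists alpha0, 0 < alpha0 /\
     exists astar : R -> R,
       (forall alpha, 0 < alpha < alpha0 ->
          0 < astar alpha < b /\ key_eq k b (1 - alpha) S mu (astar alpha)) /\
       filterlim (fun alpha => astar alpha / (alpha ^ 2 * (1 + delta S mu) / (4 * k)))
                 (at_right 0) (locally 1)) /\
  (exists beta0, 0 < beta0 /\
     forall beta, 0 < beta < beta0 ->
       forall a, 0 < a < b -> ~ key_eq k b beta S mu a).
Proof.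
  split; [|split].
  - intros beta a Hb Ha. now apply equiv_part.
  - set (c0 := 1/(b*k)).
    assert (hc0 : c0 > 0) by (unfold c0; apply Rdiv_lt_0_compat; nra).
    set (a0 := Rmin (1/8) (1/(2*(1+c0)))).
    assert (Ha0 : 0 < a0) by (apply Rmin_glb_lt; [lra| apply Rdiv_lt_0_compat; lra]).
    assert (Hcond : forall alpha, 0 < alpha < a0 -> 0 < alpha <= 1/8 /\ alpha * (2*(1 + 1/(b*k))) <= 1).
    { intros alpha Hal. pose proof (Rmin_l (1/8) (1/(2*(1+c0)))). pose proof (Rmin_r (1/8) (1/(2*(1+c0)))).
      fold a0 in H, H0. split; [lra|]. fold c0.
      assert (alpha < 1/(2*(1+c0))) by lra.
      left. apply Rmult_lt_reg_r with (/(2*(1+c0))); [apply Rinv_0_lt_compat; lra|].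
      replace (alpha * (2 * (1 + c0)) * / (2 * (1 + c0))) with alpha by (field; lra).
      replace (1 * / (2 * (1 + c0))) with (1/(2*(1+c0))) by (unfold Rdiv; ring). lra. }
    exists a0. split; [exact Ha0|]. exists (astar_f k b S mu). split.
    + intros alpha Hal. destruct (Hcond alpha Hal).
      destruct (core k b S mu alpha hk hb hS hmu hSmu H H0) as [h1 [h2 _]]. auto.
    + apply filterlim_locally. intros eps.
      set (K := (4*(1/(b*k)) + (1/(b*k))^2 + 45)/2).
      assert (HK : K > 0) by (unfold K; fold c0; assert (c0^2 >= 0) by (apply Rle_ge, pow2_ge_0); lra).
      assert (Hd : 0 < Rmin a0 (eps/K)) by (apply Rmin_glb_lt; [lra|apply Rdiv_lt_0_compat; [apply cond_pos|lra]]).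
      exists (mkposreal _ Hd). intros y Hy Hy0. change R in y.
      unfold ball in Hy; simpl in Hy; unfold AbsRing_ball in Hy; simpl in Hy.
      unfold abs, minus, plus, opp in Hy; simpl in Hy.
      rewrite Ropp_0, Rplus_0_r in Hy. rewrite Rabs_pos_eq in Hy by lra.
      pose proof (Rmin_l a0 (eps/K)). pose proof (Rmin_r a0 (eps/K)).
      destruct (Hcond y ltac:(lra)).
      destruct (core k b S mu y hk hb hS hmu hSmu H1 H2) as [_ [_ h3]].
      fold K in h3.
      change (Rabs (astar_f k b S mu y / (y^2 * (1 + delta S mu) / (4*k)) - 1) < eps).
      assert (K*y < eps).
      { assert (y < eps/K) by lra. apply Rmult_lt_reg_r with (/K). apply Rinv_0_lt_compat; lra.
        replace (K*y*/K) with y by (field; lra). exact H3. }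
      lra.
  - now apply part_ii.
Qed.
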